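(* For a causal stable system $P$ on $\mathcal{L}_{2e+}^n$, $\theta(P)\le\theta_e(P)$. Moreover, if $\theta(P)\in[0,\pi/2]$, then $\theta(P)=\theta_e(P)$.
   Context: $\mathcal{L}_2^n$: measurable $u:\mathbb{R}\to\mathbb{R}^n$ with $\|u\|_2^2=\int|u(t)|^2dt<\infty$, inner product $\langle u,v\rangle=\int u(t)^Tv(t)\,dt$; $\mathcal{L}_{2+}=\{u\in\mathcal{L}_2:u(t)=0\ \text{for}\ t<0\}$. For $T\ge0$, $(\Gamma_Tu)(t)=u(t)$ for $t\le T$, $0$ for $t>T$, and $u_T=\Gamma_Tu$; $\mathcal{L}_{2e+}=\{u:u_T\in\mathcal{L}_{2+}\ \forall T\ge0\}$. A system is an operator $P:\mathcal{L}_{2e+}\to\mathcal{L}_{2e+}$ with $P0=0$, $P\ne0$; causal if $\Gamma_TP=\Gamma_TP\Gamma_T$ for all $T\ge0$; a causal system is stable if $Pu\in\mathcal{L}_{2+}$ for all $u\in\mathcal{L}_{2+}$ and $\sup_{0\ne u\in\mathcal{L}_{2+}}\|Pu\|_2/\|u\|_2<\infty$. The singular angle $\theta(P)\in[0,\pi]$ is given by $\cos\theta(P)=\inf\{\langle u,Pu\rangle/(\|u\|_2\|Pu\|_2):0\neq u\in\mathcal{L}_{2+},\ Pu\ne0\}$. The $\mathcal{L}_{2e}$ singular angle $\theta_e(P)\in[0,\pi]$ is given by $\cos\theta_e(P)=\inf\{\langle u_T,(Pu)_T\rangle/(\|u_T\|_2\|(Pu)_T\|_2): u\in\mathcal{L}_{2e+},\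 T>0,\ \|u_T\|_2\ne0,\ \|(Pu)_T\|_2\ne0\}$. *)

(* Defs.v *)
From HB Require Import structures.
From mathcomp Require Import all_boot all_order all_algebra.
From mathcomp Require Import all_classical all_reals all_analysis.
Set Implicit Arguments. Unset Strict Implicit. Unset Printing Implicit Defensive.
Import Order.TTheory GRing.Theory Num.Theory.
Import numFieldNormedType.Exports.
Local Open Scope classical_set_scope.
Local Open Scope ring_scope.

Section Signals.
Variables (R : realType) (n : nat).

Definition signal := R -> 'I_n -> R.

Definition dotv (x y : 'I_n -> R) : R := \sum_(i < n) x i * y i.
Definition sqnorm (x : 'I_n -> R) : R := dotv x x.

(* L_2^n : measurable (componentwise, i.e. Borel-measurable into R^n)
   with finite integral of |u(t)|^2. *)
Definition L2 (u : signal) : Prop :=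
  (forall i : 'I_n, measurable_fun setT (fun t : R => u t i)) /\
  (\int[lebesgue_measure]_t (sqnorm (u t))%:E < +oo)%E.

Definition L2p (u : signal) : Prop :=
  L2 u /\ (forall t : R, t < 0 -> u t = (fun _ => 0)).

Definition trunc (T : R) (u : signal) : signal :=
  fun t => if t <= T then u t else (fun _ => 0).

Definition L2ep (u : signal) : Prop :=
  forall T : R, 0 <= T -> L2p (trunc T u).

Definition inner (u v : signal) : R :=
  Rintegral lebesgue_measure setT (fun t => dotv (u t) (v t)).
Definition norm2 (u : signal) : R :=
  Num.sqrt (Rintegral lebesgue_measure setT (fun t => sqnorm (u t))).

Definition zero_signal : signal := fun _ _ => 0.

Definition is_system (P : signal -> signal) : Prop :=
  (forall u, L2ep u -> L2ep (P u)) /\ P zero_signal = zero_signal /\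
  (exists u, L2ep u /\ P u <> zero_signal).

Definition causal (P : signal -> signal) : Prop :=
  forall T : R, 0 <= T -> forall u, L2ep u ->
    trunc T (P u) = trunc T (P (trunc T u)).

(* stable: maps L2+ into L2+ with finite gain; "0 <> u" is read in L_2,
   i.e. ||u||_2 <> 0. *)
Definition stable (P : signal -> signal) : Prop :=
  (forall u, L2p u -> L2p (P u)) /\
  (exists c : R, forall u, L2p u -> norm2 u != 0 -> norm2 (P u) / norm2 u <= c).

Definition singular_angle (P : signal -> signal) : R :=
  acos (inf [set r | exists u, L2p u /\ norm2 u != 0 /\ norm2 (P u) != 0 /\
                      r = inner u (P u) / (norm2 u * norm2 (P u))]).

Definition singular_angle_e (P : signal -> signal) : R :=
  acos (inf [set r | exists u (T : R), L2ep u /\ 0 < T /\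
                      norm2 (trunc T u) != 0 /\ norm2 (trunc T (P u)) != 0 /\
                      r = inner (trunc T u) (trunc T (P u)) /
                          (norm2 (trunc T u) * norm2 (trunc T (P u)))]).

End Signals.

(* Main.v *)
Require Import Defs.
From HB Require Import structures.
From mathcomp Require Import all_boot all_order all_algebra.
From mathcomp Require Import all_classical all_reals all_analysis.
From mathcomp Require Import ring lra.
From mathcomp Require Import measurable_realfun.
Import Order.TTheory GRing.Theory Num.Theory.
Import numFieldNormedType.Exports.
Local Open Scope classical_set_scope.
Local Open Scope ring_scope.

Section Aux.
Context {R : realType} {n : nat}.
Notation mu := (@lebesgue_measure R).
Implicit Types (x y : 'I_n -> R) (u v : signal R n).

Lemma sqnorm_ge0 x : 0 <= sqnorm x.
Proof. by rewrite /sqnorm /dotv; apply: sumr_ge0 => i _; rewrite -expr2 sqr_ge0. Qed.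

Lemma dot_bound (c : R) x y : 0 < c ->
  0 <= c * sqnorm x + c^-1 * sqnorm y + 2 * dotv x y /\
  0 <= c * sqnorm x + c^-1 * sqnorm y - 2 * dotv x y.
Proof.
move=> c0; rewrite /sqnorm /dotv !mulr_sumr -!big_split /= -sumrN -big_split /=.
split; apply: sumr_ge0 => i _.
  have -> : c * (x i * x i) + c^-1 * (y i * y i) + 2 * (x i * y i)
     = c^-1 * (c * x i + y i) ^+ 2 by field; rewrite gt_eqF.
  by apply: mulr_ge0; [rewrite invr_ge0 ltW | rewrite sqr_ge0].
have -> : c * (x i * x i) + c^-1 * (y i * y i) - 2 * (x i * y i)
   = c^-1 * (c * x i - y i) ^+ 2 by field; rewrite gt_eqF.
by apply: mulr_ge0; [rewrite invr_ge0 ltW | rewrite sqr_ge0].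
Qed.

Lemma dot_abs x y : `|dotv x y| <= sqnorm x + sqnorm y.
Proof.
have [h1 h2] := @dot_bound 1 x y ltr01.
rewrite invr1 !mul1r in h1 h2.
have := sqnorm_ge0 x; have := sqnorm_ge0 y.
rewrite ler_norml; move=> *; apply/andP; split; lra.
Qed.

Lemma dot0l y : dotv (fun _ => 0) y = 0.
Proof. by rewrite /dotv big1 // => i _; rewrite mul0r. Qed.
Lemma dot0r x : dotv x (fun _ => 0) = 0.
Proof. by rewrite /dotv big1 // => i _; rewrite mulr0. Qed.


Definition Lint (f : R -> R) := mu.-integrable setT (EFin \o f).

Lemma LintD f g : Lint f -> Lint g -> Lint (fun t => f t + g t).
Proof.
move=> hf hg; rewrite /Lint.
have -> : EFin \o (fun t => f t + g t) = (fun t => (EFin \o f) t + (EFin \o g) t)%E.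
  by apply/funext => t.
exact: integrableD.
Qed.

Arguments LintD {f g}.

Lemma LintZ k f : Lint f -> Lint (fun t => k * f t).
Proof.
move=> hf; rewrite /Lint.
have -> : EFin \o (fun t => k * f t) = (fun t => k%:E * (EFin \o f) t)%E.
  by apply/funext => t.
exact: integrableZl.
Qed.

Arguments LintZ k {f}.

Lemma L2_meas_sq u : L2 u -> measurable_fun setT (fun t => sqnorm (u t)).
Proof.
move=> [hu _]; rewrite /sqnorm /dotv; apply: measurable_sum => i.
by apply: measurable_funM; apply: hu.
Qed.

Lemma L2_meas_dot u v : L2 u -> L2 v -> measurable_fun setT (fun t => dotv (u t) (v t)).
Proof.
move=> [hu _] [hv _]; rewrite /dotv; apply: measurable_sum => i.
by apply: measurable_funM; [apply: hu | apply: hv].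
Qed.

Lemma L2_int_sq u : L2 u -> Lint (fun t => sqnorm (u t)).
Proof.
move=> hu; apply/integrableP; split; first by apply/measurable_EFinP; exact: L2_meas_sq.
apply: (le_lt_trans _ hu.2); rewrite le_eqVlt; apply/orP; left; apply/eqP.
by apply: eq_integral => t _ /=; rewrite ger0_norm // sqnorm_ge0.
Qed.

Lemma L2_int_dot u v : L2 u -> L2 v -> Lint (fun t => dotv (u t) (v t)).
Proof.
move=> hu hv; have hg := LintD (L2_int_sq _ hu) (L2_int_sq _ hv).
rewrite /Lint; apply: le_integrable hg => //.
- by apply/measurable_EFinP; exact: L2_meas_dot.
- move=> t _ /=; rewrite lee_fin (ger0_norm (addr_ge0 (sqnorm_ge0 _) (sqnorm_ge0 _))).
  exact: dot_abs.
Qed.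

Lemma norm2_ge0 u : 0 <= norm2 u.
Proof. exact: sqrtr_ge0. Qed.

Lemma norm2_sq u : norm2 u ^+ 2 = Rintegral mu setT (fun t => sqnorm (u t)).
Proof. by rewrite /norm2 sqr_sqrtr // Rintegral_ge0 // => t _; apply: sqnorm_ge0. Qed.

Lemma CS u v : L2 u -> L2 v -> norm2 u != 0 -> norm2 v != 0 ->
  -1 <= inner u v / (norm2 u * norm2 v) <= 1.
Proof.
move=> hu hv nu nv.
have a0 : 0 < norm2 u by rewrite lt0r nu norm2_ge0.
have b0 : 0 < norm2 v by rewrite lt0r nv norm2_ge0.
set a := norm2 u in a0 nu *; set b := norm2 v in b0 nv *.
have c0 : 0 < b / a by rewrite divr_gt0.
have Iu := L2_int_sq _ hu; have Iv := L2_int_sq _ hv; have Id := L2_int_dot _ _ hu hv.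
have e1 : b / a * a ^+ 2 = a * b by field; rewrite ?nu ?nv.
have e2 : (b / a)^-1 * b ^+ 2 = a * b by field; rewrite ?nu ?nv.
have key : forall s : R, s = 1 \/ s = -1 ->
    0 <= a * b + a * b + 2 * s * inner u v.
  move=> s hs.
  have h1 : 0 <= Rintegral mu setT (fun t => b / a * sqnorm (u t) +
      (b / a)^-1 * sqnorm (v t) + (2 * s) * dotv (u t) (v t)).
    apply: Rintegral_ge0 => t _; have [h1 h2] := @dot_bound _ (u t) (v t) c0.
    by case: hs => ->; rewrite ?mulr1 ?mulrN1 ?mulNr.
  rewrite (RintegralD measurableT (LintD (LintZ _ Iu) (LintZ _ Iv)) (LintZ _ Id)) in h1.
  rewrite (RintegralD measurableT (LintZ _ Iu) (LintZ _ Iv)) in h1.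
  rewrite !RintegralZl // -!norm2_sq e1 e2 in h1.
  exact: h1.
have k1 := key 1 (or_introl erefl); have k2 := key (-1) (or_intror erefl).
have ab0 : 0 < a * b by rewrite mulr_gt0.
set I := inner u v in k1 k2 *.
rewrite ler_pdivlMr // ler_pdivrMr //.
apply/andP; split; lra.
Qed.


Lemma trunc_ap (T : R) u t i : trunc T u t i = if t <= T then u t i else 0.
Proof. by rewrite /trunc; case: ifP. Qed.

Lemma sq_trunc (T : R) u t : sqnorm (trunc T u t) = if t <= T then sqnorm (u t) else 0.
Proof. by rewrite /trunc; case: ifP => // _; rewrite /sqnorm dot0l. Qed.

Lemma dot_trunc (T : R) u v t :
  dotv (trunc T u t) (trunc T v t) = if t <= T then dotv (u t) (v t) else 0.
Proof. by rewrite /trunc; case: ifP => // _; rewrite dot0l. Qed.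

Lemma meas_if (T : R) (h : R -> R) : measurable_fun setT h ->
  measurable_fun setT (fun t : R => if t <= T then h t else 0).
Proof.
move=> mh.
have mb : measurable_fun setT (fun t : R => t <= T).
  by apply: (@measurable_fun_ler _ _ _ _ idfun (cst T)); [exact: measurable_id | exact: measurable_cst].
by apply: (measurable_fun_ifT mb) => //; exact: measurable_cst.
Qed.

Lemma Lint_meas h : Lint h -> measurable_fun setT h.
Proof. by move=> Ih; apply/measurable_EFinP; exact: (measurable_int mu Ih). Qed.

Lemma Lint_L2 (w : signal R n) : (forall i, measurable_fun setT (fun t => w t i)) ->
  Lint (fun t => sqnorm (w t)) -> L2 w.
Proof.
move=> mw /integrableP [_ hw]; split => //.
apply: le_lt_trans hw; rewrite le_eqVlt; apply/orP; left; apply/eqP.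
by apply: eq_integral => t _ /=; rewrite ger0_norm // sqnorm_ge0.
Qed.

Lemma Lint_if (T : R) h : Lint h -> Lint (fun t => if t <= T then h t else 0).
Proof.
move=> Ih; have Ia := integrable_abse Ih.
rewrite /Lint; apply: le_integrable Ia => //.
- by apply/measurable_EFinP; apply: meas_if; exact: Lint_meas.
- move=> t _ /=; case: ifP => _; rewrite ?normr_id // normr0 lee_fin //.
Qed.

Lemma L2_trunc (T : R) u : L2 u -> L2 (trunc T u).
Proof.
move=> hu; apply: Lint_L2.
  move=> i; under eq_fun do rewrite trunc_ap; apply: meas_if; exact: hu.1.
under eq_fun do rewrite sq_trunc; apply: Lint_if; exact: L2_int_sq.
Qed.

Lemma L2p_trunc (T : R) u : L2p u -> L2p (trunc T u).
Proof.
move=> [hu hn]; split; first exact: L2_trunc.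
by move=> t t0; rewrite /trunc; case: ifP => // _; apply: hn.
Qed.

Lemma cvg_trunc_int h : Lint h ->
  (fun k : nat => Rintegral mu setT (fun t => if t <= k.+1%:R then h t else 0))
    @ \oo --> Rintegral mu setT h.
Proof.
move=> Ih.
have Ia : mu.-integrable setT (EFin \o (fun t => `|h t|)) by exact: integrable_abse Ih.
have mh := Lint_meas _ Ih.
pose G := EFin \o (fun t => `|h t|).
pose F := fun (k : nat) (t : R) => (if t <= k.+1%:R then h t else 0)%:E.
have absfg : forall k t, setT t -> (`|F k t| <= G t)%E.
  move=> k t _; rewrite /F; case: ifP => _ /=; rewrite ?normr0 lee_fin //.
have fing : forall t, setT t -> G t \is a fin_num.
  by move=> t _.
have ff : forall t, setT t -> F ^~ t @ \oo --> (EFin \o h) t.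
  move=> t _; apply: cvg_near_cst.
  have t0 : 0 <= `|t| by [].
  exists (Num.Def.archi_bound `|t|) => // k /= hk.
  rewrite /F ifT //; apply: (le_trans (ler_norm t)); apply: ltW.
  apply: (lt_le_trans (archi_boundP t0)); rewrite ler_nat; exact: leqW.
have mF : forall k, measurable_fun setT (F k).
  by move=> k; apply/measurable_EFinP; apply: meas_if.
have := @dominated_cvg _ _ _ mu setT measurableT F (EFin \o h) G mF ff fing Ia absfg.
rewrite -(fineK (integrable_fin_num measurableT Ih)) => /fine_cvg.
by [].
Qed.


Lemma acos_in (x : R) : -1 <= x <= 1 -> acos x \in `[0, pi].
Proof. by move=> h; rewrite in_itv /= acos_ge0 // acos_lepi. Qed.

Lemma acos_lt (x y : R) : -1 <= x <= 1 -> -1 <= y <= 1 -> x < y -> acos y < acos x.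
Proof.
move=> hx hy xy; rewrite -(ltr_cos (acos_in _ hy) (acos_in _ hx)).
by rewrite !acosK // in_itv /=.
Qed.

Lemma acos_anti (x y : R) : -1 <= x <= 1 -> -1 <= y <= 1 -> x <= y -> acos y <= acos x.
Proof.
move=> hx hy; rewrite le_eqVlt => /orP [/eqP -> // | xy].
exact/ltW/acos_lt.
Qed.

Lemma final (S Se : set R) :
  (forall r, S r -> -1 <= r <= 1) ->
  (forall r, Se r -> -1 <= r <= 1) ->
  (forall s, S s -> forall e, 0 < e -> exists r, Se r /\ r < s + e) ->
  (forall r, Se r -> exists s, S s /\ (0 <= s -> s <= r)) ->
  acos (inf S) <= acos (inf Se) /\
  (acos (inf S) <= pi / 2 -> acos (inf S) = acos (inf Se)).
Proof.
move=> F1 F1e F2 F3.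
case: (pselect (S !=set0)) => [[s0 Ss0] | S0]; last first.
  have Se0 : Se = set0.
    apply/seteqP; split => // r Ser; have [s [Ss _]] := F3 r Ser.
    by apply: S0; exists s.
  have -> : S = set0 by apply/seteqP; split => // s Ss; apply: S0; exists s.
  by rewrite Se0; split.
have [r0 [Ser0 _]] := F2 s0 Ss0 1 ltr01.
have lbS : has_lbound S by exists (-1) => s /F1 /andP [].
have lbSe : has_lbound Se by exists (-1) => s /F1e /andP [].
have iS : -1 <= inf S <= 1.
  apply/andP; split; first by apply: lb_le_inf; [exists s0 | move=> s /F1 /andP []].
  apply: (le_trans (ge_inf lbS Ss0)); by have /andP [] := F1 _ Ss0.
have iSe : -1 <= inf Se <= 1.
  apply/andP; split; first by apply: lb_le_inf; [exists r0 | move=> s /F1e /andP []].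
  apply: (le_trans (ge_inf lbSe Ser0)); by have /andP [] := F1e _ Ser0.
have k1 : inf Se <= inf S.
  apply: lb_le_inf; first by exists s0.
  move=> s Ss; rewrite leNgt; apply/negP => hs.
  have e0 : 0 < inf Se - s by rewrite subr_gt0.
  have [r [Ser hr]] := F2 s Ss (inf Se - s) e0.
  have := ge_inf lbSe Ser; rewrite leNgt; move/negP; apply.
  by move: hr; rewrite addrC subrK.
split; first exact: acos_anti _ _ iSe iS k1.
move=> hpi.
have iS0 : 0 <= inf S.
  rewrite leNgt; apply/negP => hneg.
  have h0 : -1 <= (0:R) <= 1 by rewrite lerN10 ler01.
  have := acos_lt _ _ iS h0 hneg; rewrite acos0 ltNge hpi.
  by [].
have k2 : inf S <= inf Se.
  apply: lb_le_inf; first by exists r0.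
  move=> r Ser; have [s [Ss hs]] := F3 r Ser.
  have := ge_inf lbS Ss => hS.
  exact: (le_trans hS (hs (le_trans iS0 hS))).
by rewrite (@le_anti _ _ (inf S) (inf Se)) // k1 k2.
Qed.


Variable P : signal R n -> signal R n.
Hypothesis Pst : forall u, L2p u -> L2p (P u).

Lemma F1S r : (exists u, L2p u /\ norm2 u != 0 /\ norm2 (P u) != 0 /\
   r = inner u (P u) / (norm2 u * norm2 (P u))) -> -1 <= r <= 1.
Proof.
move=> [u [hu [nu [nPu ->]]]]; exact: (CS _ _ hu.1 (Pst _ hu).1 nu nPu).
Qed.

Lemma F1Se (Psys : forall u, L2ep u -> L2ep (P u)) r :
  (exists u (T : R), L2ep u /\ 0 < T /\
     norm2 (trunc T u) != 0 /\ norm2 (trunc T (P u)) != 0 /\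
     r = inner (trunc T u) (trunc T (P u)) /
         (norm2 (trunc T u) * norm2 (trunc T (P u)))) -> -1 <= r <= 1.
Proof.
move=> [u [T [hu [T0 [n1 [n2 ->]]]]]].
exact: (CS _ _ (hu T (ltW T0)).1 (Psys _ hu T (ltW T0)).1 n1 n2).
Qed.

Lemma F3 (Pc : causal P) r :
  (exists u (T : R), L2ep u /\ 0 < T /\
     norm2 (trunc T u) != 0 /\ norm2 (trunc T (P u)) != 0 /\
     r = inner (trunc T u) (trunc T (P u)) /
         (norm2 (trunc T u) * norm2 (trunc T (P u)))) ->
  exists s, (exists u, L2p u /\ norm2 u != 0 /\ norm2 (P u) != 0 /\
   s = inner u (P u) / (norm2 u * norm2 (P u))) /\ (0 <= s -> s <= r).
Proof.
move=> [u [T [hu [T0 [n1 [n2 ->]]]]]].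
have hv := hu T (ltW T0).
rewrite (Pc T (ltW T0) u hu) in n2 *.
set v := trunc T u in hv n1 n2 *.
have hPv := Pst _ hv.
have le1 : norm2 (trunc T (P v)) <= norm2 (P v).
  rewrite /norm2 ler_wsqrtr //; apply: le_Rintegral => //.
  - exact: L2_int_sq _ (L2_trunc T _ hPv.1).
  - exact: L2_int_sq _ hPv.1.
  - by move=> t _; rewrite sq_trunc; case: ifP => // _; exact: sqnorm_ge0.
have b'0 : 0 < norm2 (trunc T (P v)) by rewrite lt0r n2 norm2_ge0.
have b0 : 0 < norm2 (P v) by apply: lt_le_trans le1.
have a0 : 0 < norm2 v by rewrite lt0r n1 norm2_ge0.
have eI : inner v (trunc T (P v)) = inner v (P v).
  apply: eq_Rintegral => t _.
  have -> : trunc T (P v) t = if t <= T then P v t else (fun _ => 0) by [].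
  have -> : v t = if t <= T then u t else (fun _ => 0) by [].
  by case: ifP => // _; rewrite !dot0l.
rewrite eI; exists (inner v (P v) / (norm2 v * norm2 (P v))); split.
  by exists v; split => //; split => //; split => //; rewrite gt_eqF.
move=> s0.
have I0 : 0 <= inner v (P v).
  by move: s0; rewrite ler_pdivlMr ?mul0r // mulr_gt0.
apply: ler_wpM2l => //; rewrite lef_pV2 ?posrE ?mulr_gt0 //.
by apply: ler_wpM2l => //; exact: ltW.
Qed.


Lemma F2 s : (exists u, L2p u /\ norm2 u != 0 /\ norm2 (P u) != 0 /\
   s = inner u (P u) / (norm2 u * norm2 (P u))) ->
  forall e, 0 < e -> exists r,
  (exists u (T : R), L2ep u /\ 0 < T /\
     norm2 (trunc T u) != 0 /\ norm2 (trunc T (P u)) != 0 /\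
     r = inner (trunc T u) (trunc T (P u)) /
         (norm2 (trunc T u) * norm2 (trunc T (P u)))) /\ r < s + e.
Proof.
move=> [u [hu [nu [nPu ->]]]] e e0.
have hPu := Pst _ hu.
pose Ik k := Rintegral mu setT (fun t => if t <= k.+1%:R then dotv (u t) (P u t) else 0).
pose Ak k := Rintegral mu setT (fun t => if t <= k.+1%:R then sqnorm (u t) else 0).
pose Bk k := Rintegral mu setT (fun t => if t <= k.+1%:R then sqnorm (P u t) else 0).
have cI : Ik @ \oo --> inner u (P u) := cvg_trunc_int _ (L2_int_dot _ _ hu.1 hPu.1).
have cA0 := cvg_trunc_int _ (L2_int_sq _ hu.1).
have cB0 := cvg_trunc_int _ (L2_int_sq _ hPu.1).
have cA : (fun k => Num.sqrt (Ak k)) @ \oo --> norm2 u.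
  exact: (continuous_cvg _ (@sqrt_continuous R _) cA0).
have cB : (fun k => Num.sqrt (Bk k)) @ \oo --> norm2 (P u).
  exact: (continuous_cvg _ (@sqrt_continuous R _) cB0).
have cR : (fun k => Ik k / (Num.sqrt (Ak k) * Num.sqrt (Bk k))) @ \oo -->
    inner u (P u) / (norm2 u * norm2 (P u)).
  apply: cvgM => //; apply: cvgV; [by rewrite mulf_neq0 | exact: cvgM].
have se : inner u (P u) / (norm2 u * norm2 (P u)) <
    inner u (P u) / (norm2 u * norm2 (P u)) + e by rewrite ltrDl.
have E1 : \forall k \near \oo, Ik k / (Num.sqrt (Ak k) * Num.sqrt (Bk k)) <
    inner u (P u) / (norm2 u * norm2 (P u)) + e by exact: cvgr_lt _ cR _ se.
have E2 : \forall k \near \oo, Num.sqrt (Ak k) != 0 by exact: cvgr_neq0 _ cA nu.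
have E3 : \forall k \near \oo, Num.sqrt (Bk k) != 0 by exact: cvgr_neq0 _ cB nPu.
have [k [h1 [h2 h3]]] := filter_ex (filterI E1 (filterI E2 E3)).
have eA : norm2 (trunc k.+1%:R u) = Num.sqrt (Ak k).
  by rewrite /norm2; congr Num.sqrt; apply: eq_Rintegral => t _; exact: sq_trunc.
have eB : norm2 (trunc k.+1%:R (P u)) = Num.sqrt (Bk k).
  by rewrite /norm2; congr Num.sqrt; apply: eq_Rintegral => t _; exact: sq_trunc.
have eI : inner (trunc k.+1%:R u) (trunc k.+1%:R (P u)) = Ik k.
  by apply: eq_Rintegral => t _; exact: dot_trunc.
exists (Ik k / (Num.sqrt (Ak k) * Num.sqrt (Bk k))); split => //.
exists u, k.+1%:R; split; first by move=> T _; exact: L2p_trunc.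
by rewrite eA eB eI ltr0Sn.
Qed.

End Aux.

Theorem proposition9 (R : realType) (n : nat) (P : signal R n -> signal R n) :
  is_system P -> causal P -> stable P ->
  singular_angle P <= singular_angle_e P /\
  (singular_angle P <= pi / 2 -> singular_angle P = singular_angle_e P).
Proof.
move=> [Psys _] Pc [Pst _].
rewrite /singular_angle /singular_angle_e.
apply: final.
- by move=> r; apply: F1S.
- by move=> r; apply: F1Se.
- by move=> s; apply: F2.
- by move=> r; apply: F3.
Qed.
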